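(* Consider the thresholding bandit setting and algorithm LSA with parameter $\alpha$ in the context, with $0<\alpha\le 8$ and $T\ge\max\{40/\alpha+1,40\}K$. Let $f(x)=\alpha x+\ln\alpha+0.5-\alpha$. For every arm $i\in B$ and every $\varkappa\ge\frac{\alpha-\ln\alpha-0.5}{\alpha}$ (with $\Pr(\mathcal{F}_{\Lambda-f(\varkappa)})>0$), \[ \Pr\big(T_i(T)<\lambda_i/20\,\big|\,\mathcal{F}_{\Lambda-f(\varkappa)}\big)\le\frac{\Pr(\overline{\mathcal{M}_{i,\varkappa}})}{\Pr(\mathcal{F}_{\Lambda-f(\varkappa)})}. \]
   Context: $K\ge2$ arms; arm $i$ has reward distribution $\mathcal{D}_i$ on $[0,1]$ with mean $\theta_i$; $\theta\in(0,1)$; $\Delta_i=|\theta_i-\theta|$ (convention $\ln(1/0)=+\infty$). For each $i$, rewards $X_{i,1},X_{i,2},\dots$ from successive pulls of arm $i$ are i.i.d. from $\mathcal{D}_i$, independent across arms; $\hat\Delta_{i,t}=|\frac1t\sum_{s\le t}X_{i,s}-\theta|$. $T_i(t)$ = number of pulls of arm $i$ in the first $t$ rounds; $\hat\Delta_i(t)=\hat\Delta_{i,T_i(t)}$. LSA (parameter $\alpha>0$, budget $T$): pull each arm once in rounds $1..K$; in round $t=K+1,\dots,T$ pull an arm minimizing $\alpha T_i(t-1)(\hat\Delta_i(t-1))^2+0.5\ln T_i(t-1)$. $\xi_i(t)=\alpha T_i(t)(\hat\Delta_i(t))^2+0.5\ln T_i(t)$ for $t\ge K$; $\mathcal{F}_C=\{\exists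 T',K\le T'\le T:\xi_i(T')>C\ \forall i\}$. $M=\max\{40/\alpha+1,40\}$; $g_i(x)=e^{2x}$ if $x\le\ln\Delta_i^{-1}$, $g_i(x)=\frac{x-\ln\Delta_i^{-1}+\alpha}{\alpha\Delta_i^2}$ otherwise; $\Lambda$ is the unique $x\ge0$ with $\sum_ig_i(x)=T/M$; $\lambda_i=g_i(\Lambda)$; $B=\{i:\ln\Delta_i^{-1}<\Lambda\}$. $\mathcal{M}_{i,\varkappa}$ is the event that for all integers $1\le t\le\lambda_i$, $|\hat\Delta_{i,t}-\Delta_i|\le\sqrt{(\lambda_i\Delta_i^2/5-\varkappa/2+\frac1{4\alpha}\ln\frac{\lambda_i}{t})/t}$; $\overline{\mathcal{M}_{i,\varkappa}}$ is its complement. *)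

(* Defs.v *)
From HB Require Import structures.
From mathcomp Require Import all_boot all_order all_algebra.
From mathcomp Require Import all_classical all_reals all_analysis.
Set Implicit Arguments. Unset Strict Implicit. Unset Printing Implicit Defensive.
Import Order.TTheory GRing.Theory Num.Theory.
Local Open Scope classical_set_scope.
Local Open Scope ring_scope.

Section LSA.
Context {R : realType}.

Definition mutually_independent {d} {Omega : measurableType d}
  (P : probability Omega R) {I : eqType} (Y : I -> Omega -> R) : Prop :=
  forall (J : seq I) (B : I -> set R),
    uniq J -> (forall j, j \in J -> measurable (B j)) ->
    P [set w | forall j, j \in J -> B j (Y j w)]
    = \big[*%E/1%E]_(j <- J) P (Y j @^-1` B j).

Definition cond_prob {d} {Omega : measurableType d}
  (P : probability Omega R) (A C : set Omega) : R :=
  fine (P (A `&` C)) / fine (P C).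

Definition npulls (K : nat) (A : nat -> 'I_K) (i : 'I_K) (t : nat) : nat :=
  \sum_(1 <= s < t.+1) (A s == i : nat).

(* \hat\Delta_{i,t} = |(1/t) sum_{s<=t} X_{i,s} - theta|, where x s = X_{i,s+1}. *)
Definition emp_gap (x : nat -> R) (theta : R) (t : nat) : R :=
  `| (t%:R)^-1 * (\sum_(s < t) x s) - theta |.

Definition xi (alpha theta : R) (K : nat) (A : nat -> 'I_K)
  (X : 'I_K -> nat -> R) (i : 'I_K) (t : nat) : R :=
  alpha * (npulls A i t)%:R * (emp_gap (X i) theta (npulls A i t)) ^+ 2
  + 2^-1 * ln ((npulls A i t)%:R).

(* The pull sequence A (rounds 1..T) is a run of LSA with parameter alpha and
   budget T on the reward table X (any tie-breaking). *)
Definition LSA_run (alpha theta : R) (K T : nat) (A : nat -> 'I_K)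
  (X : 'I_K -> nat -> R) : Prop :=
  (forall i, npulls A i K = 1%N) /\
  (forall t, (K < t <= T)%N ->
     forall j, xi alpha theta A X (A t) t.-1 <= xi alpha theta A X j t.-1).

Definition F_event {Omega : Type} (alpha theta : R) (K T : nat)
  (A : nat -> Omega -> 'I_K) (X : 'I_K -> nat -> Omega -> R) (C : R)
  : set Omega :=
  [set w | exists T', (K <= T' <= T)%N /\
     forall i, C < xi alpha theta (fun s => A s w) (fun j s => X j s w) i T'].

Definition Mconst (alpha : R) : R := Num.max (40 / alpha + 1) 40.

(* g_i, with Delta = Delta_i, convention ln(1/0) = +oo *)
Definition gfun (alpha Delta x : R) : R :=
  if (Delta == 0) || (x <= ln Delta^-1) then expR (2 * x)
  else (x - ln Delta^-1 + alpha) / (alpha * Delta ^+ 2).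

Definition ffun (alpha x : R) : R := alpha * x + ln alpha + 2^-1 - alpha.

(* Event M_{i,kappa} (for arm with reward sequence x, gap Delta, lambda_i = lam).
   The inequality |a| <= sqrt(y) is read as requiring y >= 0. *)
Definition M_event {Omega : Type} (alpha theta Delta lam kappa : R)
  (x : nat -> Omega -> R) : set Omega :=
  [set w | forall t : nat, (1 <= t)%N -> t%:R <= lam ->
     let y := (lam * Delta ^+ 2 / 5 - kappa / 2
               + (4 * alpha)^-1 * ln (lam / t%:R)) / t%:R in
     0 <= y /\ `| emp_gap (fun s => x s w) theta t - Delta | <= Num.sqrt y].

End LSA.

(* Main.v *)
Require Import Defs.
From HB Require Import structures.
From mathcomp Require Import all_boot all_order all_algebra.
From mathcomp Require Import all_classical all_reals all_analysis.
From mathcomp Require Import ring lra.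
Import Order.TTheory GRing.Theory Num.Theory.
Local Open Scope classical_set_scope.
Local Open Scope ring_scope.

Lemma ln20_bound (R : realType) : ln (20/9 : R) <= 2^-1 + ln 20 / 8.
Proof.
have h9 : (0:R) < 20/9 by lra.
have h20 : (0:R) < 20 by lra.
have e : ln ((20/9)^+8/20 : R) = ln (20/9) *+ 8 - ln 20.
  rewrite ln_div ?lnXn //; rewrite posrE // exprn_gt0 //.
have : ln ((20/9)^+8/20 : R) <= 4.
  rewrite -[X in _ <= X](expRK (4:R)).
  rewrite ler_ln ?posrE ?expR_gt0 ?divr_gt0 ?exprn_gt0 //.
  apply: (le_trans (_ : _ <= (5/4)^+16)).
    rewrite !exprS expr0; lra.
  have -> : expR (4:R) = expR (16%:R * 4^-1) by congr expR; lra.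
  rewrite expRM_natl; apply: lerXn2r; rewrite ?nnegrE ?expR_ge0 //.
  by apply: le_trans (expR_ge1Dx _); lra.
rewrite e -mulr_natr; lra.
Qed.

Lemma key (R : realType) (a D lam k L g : R) (t : nat) :
  0 < a -> 0 < D -> ln D^-1 < L ->
  lam = (L - ln D^-1 + a) / (a * D ^+ 2) ->
  (1 <= t)%N -> t%:R < lam / 20 ->
  0 <= (lam * D ^+ 2 / 5 - k / 2 + (4 * a)^-1 * ln (lam / t%:R)) / t%:R ->
  0 <= (lam * D ^+ 2 / 5 - k / 2 + (4 * a)^-1 * ln (lam / (20 * t)%:R)) / (20 * t)%:R ->
  0 <= g ->
  g <= D + Num.sqrt ((lam * D ^+ 2 / 5 - k / 2 + (4 * a)^-1 * ln (lam / t%:R)) / t%:R) ->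
  a * t%:R * g ^+ 2 + 2^-1 * ln t%:R <= L - (a * k + ln a + 2^-1 - a).
Proof.
move=> a0 D0 hL hlam t1 tlt y1 y20 g0 gle.
set y := (_ / t%:R) in y1 gle.
have tp : (0:R) < t%:R by rewrite ltr0n.
set u := L - ln D^-1 + a.
have up : a < u by rewrite /u; lra.
have u0 : 0 < u by lra.
have hu : a * lam * D ^+ 2 = u.
  rewrite hlam /u; field; by rewrite !gt_eqF.
have lamp : 0 < lam by rewrite hlam divr_gt0 // mulr_gt0 // exprn_gt0.
have hLn : ln lam = ln u - ln a + 2 * ln D^-1.
  have -> : lam = u * a^-1 * (D^-1 ^+ 2) by rewrite hlam exprVn invfM mulrA.
  rewrite !lnM ?lnXn ?lnV ?posrE ?invr_gt0 ?mulr_gt0 ?exprn_gt0 //; first lra.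
  all: try by rewrite ?invr_gt0.
have hlt : ln (lam / t%:R) = ln lam - ln t%:R by rewrite ln_div ?posrE.
have h20t : ln (lam / (20 * t)%:R) = ln lam - ln 20 - ln t%:R.
  rewrite natrM ln_div ?lnM ?posrE ?mulr_gt0 ?ltr0n //; lra.
rewrite h20t in y20.
have num20 : 0 <= lam * D ^+ 2 / 5 - k / 2 + (4 * a)^-1 * (ln lam - ln 20 - ln t%:R).
  move: y20; rewrite pmulr_lge0 // invr_gt0 ltr0n muln_gt0 //.
have hq : a * t%:R * y = u / 5 - a * k / 2 + (ln lam - ln t%:R) / 4.
  rewrite /y hlt -hu; field; by rewrite !gt_eqF.
have hm : a * k <= 2 * u / 5 + (ln lam - ln 20 - ln t%:R) / 2.
  rewrite -hu. have := mulr_ge0 (ltW a0) num20.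
  have -> : a * (lam * D ^+ 2 / 5 - k / 2 + (4 * a)^-1 * (ln lam - ln 20 - ln t%:R))
     = a * lam * D ^+ 2 / 5 - a * k / 2 + (ln lam - ln 20 - ln t%:R) / 4.
    field; by rewrite !gt_eqF.
  lra.
have hp : a * t%:R * D ^+ 2 < u / 20.
  rewrite -hu.
  have : a * D ^+ 2 * t%:R < a * D ^+ 2 * (lam / 20).
    by rewrite ltr_pM2l // mulr_gt0 // exprn_gt0.
  lra.
have sq := sqrtr_ge0 y.
have sq2 := sqr_sqrtr y1.
set s := Num.sqrt y in gle sq sq2.
have g2 : g ^+ 2 <= 3 * D ^+ 2 + 3 / 2 * y.
  have : g ^+ 2 <= (D + s) ^+ 2 by rewrite lerXn2r // nnegrE; lra.
  rewrite -sq2 => h; have := sqr_ge0 (2 * D - s); nra.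
have hg : a * t%:R * g ^+ 2 <= 3 * (a * t%:R * D ^+ 2) + 3 / 2 * (a * t%:R * y).
  have : a * t%:R * g ^+ 2 <= a * t%:R * (3 * D ^+ 2 + 3 / 2 * y).
    by rewrite ler_pM2l // mulr_gt0.
  lra.
have lau : ln a <= ln u by rewrite ler_ln ?posrE //; lra.
have lub : ln u <= 9 / 20 * u - 1 + ln (20/9).
  have : ln (1 + (9 / 20 * u - 1)) <= 9 / 20 * u - 1 by apply: le_ln1Dx; nra.
  have -> : 1 + (9 / 20 * u - 1) = u / (20 / 9) by field.
  rewrite ln_div ?posrE //; lra.
have := ln20_bound R.
have hu2 : u = L - ln D^-1 + a by [].
clearbody u y s.
lra.
Qed.

Section Meas.
Context {R : realType} {d : measure_display} {Omega : measurableType d}.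

Lemma meas_const (P0 : Prop) : measurable [set _ : Omega | P0].
Proof.
case: (pselect P0) => h.
  by have -> : [set _ : Omega | P0] = setT by apply/seteqP; split.
by have -> : [set _ : Omega | P0] = set0 by apply/seteqP; split.
Qed.

Lemma meas_imp (P0 Q0 : Prop) (B : set Omega) : measurable B ->
  measurable [set w | P0 -> Q0 /\ B w].
Proof.
move=> mB; case: (pselect P0) => hP; last first.
  by have -> : [set w | P0 -> Q0 /\ B w] = setT by apply/seteqP; split.
case: (pselect Q0) => hQ.
  have -> : [set w | P0 -> Q0 /\ B w] = B.
    by apply/seteqP; split => w /=; [move=> /(_ hP) [] | move=> hB _].
  by [].
by have -> : [set w | P0 -> Q0 /\ B w] = set0 by apply/seteqP; split => w //= /(_ hP) [].
Qed.

Lemma meas_imp2 (P1 P0 Q0 : Prop) (B : set Omega) : measurable B ->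
  measurable [set w | P1 -> P0 -> Q0 /\ B w].
Proof.
move=> mB; case: (pselect P1) => hP; last first.
  by have -> : [set w | P1 -> P0 -> Q0 /\ B w] = setT by apply/seteqP; split.
have -> : [set w | P1 -> P0 -> Q0 /\ B w] = [set w | P0 -> Q0 /\ B w].
  by apply/seteqP; split => w /=; [move=> /(_ hP) | move=> h _].
exact: meas_imp.
Qed.

Lemma meas_dep (n : Omega -> nat) (Q : nat -> set Omega) :
  (forall k, measurable [set w | n w = k]) -> (forall k, measurable (Q k)) ->
  measurable [set w | Q (n w) w].
Proof.
move=> hn hQ.
have -> : [set w | Q (n w) w] = \bigcup_k ([set w | n w = k] `&` Q k).
  apply/seteqP; split => w /=.
    by move=> h; exists (n w).
  by move=> [k _ [/= <-]].
by apply: bigcupT_measurable => k; apply: measurableI.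
Qed.

Lemma meas_lt (f : Omega -> R) (c : R) : measurable_fun setT f ->
  measurable [set w | c < f w].
Proof.
move=> mf; have := mf measurableT _ (measurable_itv `]c, +oo[).
rewrite setTI; congr measurable; apply/seteqP; split => w /=;
  by rewrite in_itv /= andbT.
Qed.

Lemma meas_le (f : Omega -> R) (c : R) : measurable_fun setT f ->
  measurable [set w | f w <= c].
Proof.
move=> mf; have := mf measurableT _ (measurable_itv `]-oo, c]).
rewrite setTI; congr measurable; apply/seteqP; split => w /=;
  by rewrite in_itv /=.
Qed.

Lemma meas_eqn (f : Omega -> nat) (k : nat) :
  measurable_fun setT (fun w => (f w)%:R : R) -> measurable [set w | f w = k].
Proof.
move=> mf; have := mf measurableT _ (measurable_set1 (k%:R : R)).
rewrite setTI; congr measurable; apply/seteqP; split => w /=.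
  by move/eqP; rewrite eqr_nat => /eqP.
by move=> ->.
Qed.

End Meas.

Lemma npulls_mono (K : nat) (A : nat -> 'I_K) j m n : (m <= n)%N ->
  (npulls A j m <= npulls A j n)%N.
Proof.
move=> mn; rewrite /npulls [X in (_ <= X)%N](@big_cat_nat _ _ _ m.+1) //=.
exact: leq_addr.
Qed.

Lemma npulls_S (K : nat) (A : nat -> 'I_K) j n :
  npulls A j n.+1 = (npulls A j n + (A n.+1 == j))%N.
Proof. by rewrite /npulls big_nat_recr. Qed.

Lemma npulls0 (K : nat) (A : nat -> 'I_K) j : npulls A j 0 = 0%N.
Proof. by rewrite /npulls big_geq. Qed.

Theorem corollary1 (R : realType) (d : measure_display) (Omega : measurableType d)
  (P : probability Omega R) (K T : nat) (alpha theta : R)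
  (thetas : 'I_K -> R) (X : 'I_K -> nat -> Omega -> R)
  (A : nat -> Omega -> 'I_K) (Lambda kappa : R) (i : 'I_K) :
  (2 <= K)%N ->
  0 < theta < 1 ->
  (* rewards: X i s = X_{i,s+1}, measurable, i.i.d. per arm, independent across arms *)
  (forall j s, measurable_fun setT (X j s)) ->
  mutually_independent P (fun p : 'I_K * nat => X p.1 p.2) ->
  (forall j s (B : set R), measurable B ->
     P (X j s @^-1` B) = P (X j 0%N @^-1` B)) ->
  (forall j s, P [set w | 0 <= X j s w <= 1] = 1%E) ->
  (forall j, ('E_P[X j 0%N] = (thetas j)%:E)%E) ->
  (* the pulls A follow LSA with parameter alpha and budget T *)
  (forall t j, measurable [set w | A t w = j]) ->
  (forall w, LSA_run alpha theta T (fun t => A t w) (fun j s => X j s w)) ->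
  0 < alpha <= 8 ->
  Mconst alpha * K%:R <= T%:R ->
  (* Lambda is the (unique) x >= 0 with sum_j g_j(x) = T/M *)
  0 <= Lambda ->
  \sum_(j < K) gfun alpha `|thetas j - theta| Lambda = T%:R / Mconst alpha ->
  (* i in B *)
  `|thetas i - theta| != 0 -> ln (`|thetas i - theta|^-1) < Lambda ->
  (alpha - ln alpha - 2^-1) / alpha <= kappa ->
  let F := F_event alpha theta T A X (Lambda - ffun alpha kappa) in
  let lam := gfun alpha `|thetas i - theta| Lambda in
  (0 < P F)%E ->
  cond_prob P [set w | (npulls (fun t => A t w) i T)%:R < lam / 20] F
  <= fine (P (~` M_event alpha theta `|thetas i - theta| lam kappa (X i))) / fine (P F).
Proof.
move=> K2 th Xm _ _ _ _ Am LSA /andP[a0 _] _ _ _ Di Dlt _ F lam PF.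
set D := `|thetas i - theta| in Di Dlt lam *.
have D0 : 0 < D by rewrite lt_neqAle eq_sym Di normr_ge0.
have hlam : lam = (Lambda - ln D^-1 + alpha) / (alpha * D ^+ 2).
  by rewrite /lam /gfun (negbTE Di) /= leNgt Dlt.
set S := [set w | _ < lam / 20].
set M := M_event _ _ _ _ _ _.
have incl : S `&` F `<=` ~` M.
  move=> w [hS [T' [/andP [KT' T'T] hxi]]] hM.
  have := hxi i; rewrite /xi /=.
  set t := npulls (fun s => A s w) i T'.
  have t1 : (1 <= t)%N.
    have [h1 _] := LSA w.
    by rewrite -(h1 i); apply: npulls_mono.
  have tlt : t%:R < lam / 20.
    apply: le_lt_trans hS; rewrite ler_nat; exact: npulls_mono.
  have tp : (0:R) < t%:R by rewrite ltr0n.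
  have lamp : 0 < lam / 20 by apply: lt_trans tlt.
  have [y1 hgap] := hM t t1 ltac:(lra).
  have [y20 _] := hM (20 * t)%N ltac:(rewrite muln_gt0 //) ltac:(rewrite natrM; lra).
  have g0 := normr_ge0 (emp_gap (fun s => X i s w) theta t - D).
  have gle : emp_gap (fun s => X i s w) theta t <=
      D + Num.sqrt ((lam * D ^+ 2 / 5 - kappa / 2 + (4 * alpha)^-1 * ln (lam / t%:R)) / t%:R).
    have := ler_norm (emp_gap (fun s => X i s w) theta t - D); lra.
  have := @key R alpha D lam kappa Lambda _ t a0 D0 Dlt hlam t1 tlt y1 y20 (normr_ge0 _) gle.
  rewrite /ffun /emp_gap; lra.
have mN : forall j n, measurable_fun setT (fun w => (npulls (fun s => A s w) j n)%:R : R).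
  move=> j; elim=> [|n IH].
    rewrite (_ : (fun w => _) = cst 0); first exact: measurable_cst.
    by apply/funext => w; rewrite npulls0.
  rewrite (_ : (fun w => _) = (fun w => (npulls (fun s => A s w) j n)%:R) \+ \1_[set w | A n.+1 w = j]).
    apply: measurable_realfun.measurable_funD => //; exact: measurable_realfun.measurable_indic.
  apply/funext => w; rewrite npulls_S natrD /= indicE; congr (_ + _).
  by case: eqP => h; [rewrite mem_set | rewrite memNset].
have mlev : forall j n k, measurable [set w | npulls (fun s => A s w) j n = k].
  by move=> j n k; apply: meas_eqn; apply: mN.
have mgap : forall j t, measurable_fun setT (fun w => emp_gap (fun s => X j s w) theta t).
  move=> j t; rewrite /emp_gap.
  apply: measurableT_comp; first exact: measurable_realfun.normr_measurable.
  apply: measurable_realfun.measurable_funB; last exact: measurable_cst.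
  apply: measurable_realfun.measurable_funM; first exact: measurable_cst.
  by apply: measurable_sum => s; apply: Xm.
have mS : measurable S.
  apply: (meas_dep (fun w => npulls (fun s => A s w) i T)
     (fun k => [set _ | k%:R < lam / 20])) => // k.
  exact: meas_const.
have mF : measurable F.
  set C := Lambda - ffun alpha kappa.
  have -> : F = \bigcup_(T' in [set T' | (K <= T' <= T)%N])
     \bigcap_(j in [set: 'I_K]) [set w | C < xi alpha theta (fun s => A s w) (fun j s => X j s w) j T'].
    apply/seteqP; split => w /=.
      by move=> [T' [h1 h2]]; exists T' => // j _; exact: h2 j.
    by move=> [T' h1 h2]; exists T'; split => // j; exact: h2 j I.
  apply: bigcup_measurable => T' _; apply: fin_bigcap_measurable; first exact: finite_finset.
  move=> j _.
  apply: (meas_dep (fun w => npulls (fun s => A s w) j T')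
     (fun k => [set w | C < alpha * k%:R * emp_gap (fun s => X j s w) theta k ^+ 2 + 2^-1 * ln k%:R])) => // k.
  apply: meas_lt; apply: measurable_realfun.measurable_funD; last exact: measurable_cst.
  apply: measurable_realfun.measurable_funM; first exact: measurable_cst.
  rewrite (_ : (fun w => _) = (fun w => emp_gap (fun s => X j s w) theta k) \* (fun w => emp_gap (fun s => X j s w) theta k)).
    by apply: measurable_realfun.measurable_funM; apply: mgap.
  by apply/funext => w; rewrite /= expr2.
have mM : measurable M.
  pose Y (t : nat) := (lam * D ^+ 2 / 5 - kappa / 2 + (4 * alpha)^-1 * ln (lam / t%:R)) / t%:R.
  have -> : M = \bigcap_t [set w | (1 <= t)%N -> t%:R <= lam ->
      (0 <= Y t /\ `|emp_gap (fun s => X i s w) theta t - D| <= Num.sqrt (Y t))].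
    apply/seteqP; split => w.
      by move=> h t _; exact: h.
    by move=> h t; exact: h t I.
  apply: bigcapT_measurable => t; apply: meas_imp2; apply: meas_le.
  apply: measurableT_comp; first exact: measurable_realfun.normr_measurable.
  apply: measurable_realfun.measurable_funB; last exact: measurable_cst.
  exact: mgap.
have mSF := measurableI _ _ mS mF.
have mMc := measurableC mM.
have le1 : (P (S `&` F) <= P (~` M))%E.
  by apply: le_measure => //; rewrite inE.
rewrite /cond_prob; apply: ler_wpM2r.
  by rewrite invr_ge0 fine_ge0 ?measure_ge0.
apply: fine_le => //; exact: fin_num_measure.
Qed.
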